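(* Let $\mathcal{F}_0$ denote one of $\mathcal{F}_{\ell,1}$, $\mathcal{F}_{\ell,1}^{loc}$ or $\mathcal{F}_{\ell,1}^{bd}$. The center $\mathcal{Z}(\mathcal{F}_0)$ coincides with the set of all $u\in\mathcal{F}_0$ such that $u(\mathbf{X})$ is a scalar multiple of the unit matrix for every irreducible $\ell$-tuple $\mathbf{X}\in\mathbb{M}^{(\ell)}$.
   Context: $\mathbb{M}_n$: complex $n\times n$ matrices, $\mathbb{U}_n$ unitary group, $\mathbb{M}=\bigsqcup_n\mathbb{M}_n$, $\mathbb{M}^{(\ell)}=\bigsqcup_n\mathbb{M}_n^\ell$. For $\mathbf{X}=(X_1,\dots,X_\ell)\in\mathbb{M}_n^\ell$: $d(\mathbf{X})=n$, $\|\mathbf{X}\|=\max_k\|X_k\|$, $U.\mathbf{X}=(UX_kU^{-1})_k$, $\mathbf{A}\oplus\mathbf{B}=(A_k\oplus B_k)_k$. $\mathbf{X}$ is irreducible if it is not of the form $U.(\mathbf{A}\oplus\mathbf{B})$ with $U\in\mathbb{U}_{d(\mathbf{X})}$. A function $f:\mathbb{M}^{(\ell)}\to\mathbb{M}$ is compatible if $d(f(\mathbf{X}))=d(\mathbf{X})$ and $f(U.(\bigoplus_{j=1}^s\mathbf{X}_j))=U.(\bigoplus_j f(\mathbf{X}_j))$ for all finite systems $\mathbf{X}_j$ and $U\in\mathbb{U}_N$, $N=\sum_j d(\mathbf{X}_j)$. $\mathcal{F}_{\ell,1}$ is the unital $*$-algebra (pointwise operations) of compatible Borel functions $\mathbb{M}^{(\ell)}\to\mathbb{M}$;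 $\mathcal{F}^{bd}_{\ell,1}$, $\mathcal{F}^{loc}_{\ell,1}$ its subalgebras of bounded, resp. locally bounded (bounded on each $\{\|\mathbf{X}\|\le R\}$), functions. *)

(* Defs.v *)
From HB Require Import structures.
From mathcomp Require Import all_boot all_order all_algebra.
From mathcomp Require Import complex.
From mathcomp Require Import all_classical all_reals all_analysis.

Set Implicit Arguments.
Unset Strict Implicit.
Unset Printing Implicit Defensive.

Import Order.TTheory GRing.Theory Num.Theory numFieldTopology.Exports.
Local Open Scope ring_scope.
Local Open Scope classical_set_scope.

(* A function M^(l) -> M preserving dimension is a dependent family          *)

Definition mxtuple (R : realType) (l n : nat) := 'I_l -> 'M[R[i]]_n.

Definition ncfun (R : realType) (l : nat) :=
  forall n : nat, mxtuple R l n -> 'M[R[i]]_n.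

Definition adjmx (R : realType) (m n : nat) (A : 'M[R[i]]_(m, n)) : 'M[R[i]]_(n, m) :=
  (map_mx Num.conj A)^T.

Definition unitarymx (R : realType) (n : nat) (U : 'M[R[i]]_n) : Prop :=
  adjmx U *m U = 1%:M /\ U *m adjmx U = 1%:M.

Definition mxact (R : realType) (l n : nat) (U : 'M[R[i]]_n) (X : mxtuple R l n)
  : mxtuple R l n := fun k => U *m X k *m invmx U.

Definition mxtuple_dsum (R : realType) (l s : nat) (p : 'I_s -> nat)
  (X : forall j : 'I_s, mxtuple R l (p j)) : mxtuple R l (\sum_(j < s) p j) :=
  fun k => mxdiag (fun j => X j k).

Definition compatible (R : realType) (l : nat) (f : ncfun R l) : Prop :=
  forall (s : nat) (p : 'I_s -> nat) (X : forall j : 'I_s, mxtuple R l (p j))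
         (U : 'M[R[i]]_(\sum_(j < s) p j)),
    unitarymx U ->
    f _ (mxact U (mxtuple_dsum X)) = U *m mxdiag (fun j => f (p j) (X j)) *m invmx U.

(* Borel structure: M_n^l = C^(l n^2) is identified with R^(2 l n^2) through *)
(* the real and imaginary parts of the entries.                              *)
Definition reim (R : realType) (m n : nat) (A : 'M[R[i]]_(m, n)) : 'M[R]_(m, n + n) :=
  row_mx (map_mx (@complex.Re R) A) (map_mx (@complex.Im R) A).

Definition realify (R : realType) (l n : nat) (X : mxtuple R l n) : 'M[R]_(l, n * (n + n)) :=
  \matrix_(k < l, j < n * (n + n)) mxvec (reim (X k)) 0 j.

Definition borel_set (T : topologicalType) (S : set T) : Prop :=
  <<s [set V : set T | open V] >> S.

Definition borel_fun (R : realType) (l n : nat) (g : mxtuple R l n -> 'M[R[i]]_n) : Prop :=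
  forall V : set 'M[R]_(n, n + n), open V ->
    exists B : set 'M[R]_(l, n * (n + n)),
      borel_set B /\ (fun X => reim (g X)) @^-1` V = (@realify R l n) @^-1` B.

Definition opnorm_le (R : realType) (n : nat) (A : 'M[R[i]]_n) (c : R) : Prop :=
  0 <= c /\
  forall v : 'cV[R[i]]_n,
    \sum_(i < n) `|(A *m v) i 0| ^+ 2 <= ((c ^+ 2)%:C)%C * \sum_(i < n) `|v i 0| ^+ 2.

Definition tuple_norm_le (R : realType) (l n : nat) (X : mxtuple R l n) (c : R) : Prop :=
  0 <= c /\ forall k : 'I_l, opnorm_le (X k) c.

Inductive Fkind := F_all | F_loc | F_bd.

Definition in_F (R : realType) (l : nat) (K : Fkind) (f : ncfun R l) : Prop :=
  compatible f /\ (forall n, borel_fun (f n)) /\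
  match K with
  | F_all => True
  | F_loc => forall r : R, 0 <= r -> exists c : R,
               forall n (X : mxtuple R l n), tuple_norm_le X r -> opnorm_le (f n X) c
  | F_bd => exists c : R, forall n (X : mxtuple R l n), opnorm_le (f n X) c
  end.

Definition irreducible (R : realType) (l n : nat) (X : mxtuple R l n) : Prop :=
  ~ exists (a b : nat) (A : mxtuple R l a) (B : mxtuple R l b)
           (U : 'M[R[i]]_(a + b)) (H : a + b = n),
      [/\ (0 < a)%N, (0 < b)%N, unitarymx U &
          X = fun k => castmx (H, H) (U *m block_mx (A k) 0 0 (B k) *m invmx U)].

Definition in_center (R : realType) (l : nat) (K : Fkind) (u : ncfun R l) : Prop :=
  in_F K u /\
  forall v : ncfun R l, in_F K v ->
    forall n (X : mxtuple R l n), u n X *m v n X = v n X *m u n X.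

(* Main.v *)
Require Import Defs.
From HB Require Import structures.
From mathcomp Require Import all_boot all_order all_algebra.
From mathcomp Require Import complex.
From mathcomp Require Import all_classical all_reals all_analysis.
From mathcomp Require sesquilinear spectral.
Require Import Defs.
Import Order.TTheory GRing.Theory Num.Theory numFieldTopology.Exports.
Set Implicit Arguments.
Unset Strict Implicit.
Unset Printing Implicit Defensive.
Local Open Scope ring_scope.

Section Cont.
Variable R : realType.
Local Notation C := R[i].
Variable T : topologicalType.

Lemma mx_cont m n (g : T -> 'M[R]_(m,n)) :
  (forall i j, continuous (fun x => g x i j)) -> continuous g.
Proof.
move=> H x; apply/cvgrPdist_le => e e0.
near=> y.
rewrite /Num.Def.normr/= mx_normrE (bigmax_le _ (ltW e0))//= => -[i j] _.
rewrite !mxE/=.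
move: i j; near: y; apply: filter_forall => i; apply: filter_forall => j.
exact: ((cvgrPdist_le _ _).1 (H i j x)).
Unshelve. all: by end_near. Qed.

Definition ccf (F : T -> C) := continuous (fun x => complex.Re (F x)) /\
  continuous (fun x => complex.Im (F x)).

Lemma ccf_cst (c : C) : ccf (fun=> c).
Proof. by split; apply: cst_continuous. Qed.

Lemma ccf_add F G : ccf F -> ccf G -> ccf (fun x => F x + G x).
Proof.
move=> [F1 F2] [G1 G2].
have E1 : (fun x => complex.Re (F x + G x)) =
   (fun x => complex.Re (F x) + complex.Re (G x)).
  by apply: funext => x; case: (F x) => a b; case: (G x) => c d.
have E2 : (fun x => complex.Im (F x + G x)) =
   (fun x => complex.Im (F x) + complex.Im (G x)).
  by apply: funext => x; case: (F x) => a b; case: (G x) => c d.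
split; [rewrite E1|rewrite E2] => x.
  exact: continuousD (F1 x) (G1 x).
exact: continuousD (F2 x) (G2 x).
Qed.

Lemma ccf_opp F : ccf F -> ccf (fun x => - F x).
Proof.
move=> [F1 F2].
have E1 : (fun x => complex.Re (- F x)) = (fun x => - complex.Re (F x)).
  by apply: funext => x; case: (F x) => a b.
have E2 : (fun x => complex.Im (- F x)) = (fun x => - complex.Im (F x)).
  by apply: funext => x; case: (F x) => a b.
split; [rewrite E1|rewrite E2] => x.
  exact: continuousN (F1 x).
exact: continuousN (F2 x).
Qed.

Lemma ccf_mul F G : ccf F -> ccf G -> ccf (fun x => F x * G x).
Proof.
move=> [F1 F2] [G1 G2].
have E1 : (fun x => complex.Re (F x * G x)) =
   (fun x => complex.Re (F x) * complex.Re (G x) - complex.Im (F x) * complex.Im (G x)).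
  by apply: funext => x; case: (F x) => a b; case: (G x) => c d.
have E2 : (fun x => complex.Im (F x * G x)) =
   (fun x => complex.Re (F x) * complex.Im (G x) + complex.Im (F x) * complex.Re (G x)).
  by apply: funext => x; case: (F x) => a b; case: (G x) => c d.
split; [rewrite E1|rewrite E2] => x.
  exact: continuousB (continuousM (F1 x) (G1 x)) (continuousM (F2 x) (G2 x)).
have := continuousD (continuousM (F1 x) (G2 x)) (continuousM (F2 x) (G1 x)).
by [].
Qed.

Lemma ccf_conj F : ccf F -> ccf (fun x => Num.conj (F x)).
Proof.
move=> [F1 F2].
have E1 : (fun x => complex.Re (Num.conj (F x))) = (fun x => complex.Re (F x)).
  by apply: funext => x; case: (F x) => a b.
have E2 : (fun x => complex.Im (Num.conj (F x))) = (fun x => - complex.Im (F x)).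
  by apply: funext => x; case: (F x) => a b.
split; [rewrite E1|rewrite E2] => // x.
have := continuousN (F2 x); by [].
Qed.

Lemma ccf_inv F : (forall x, F x != 0) -> ccf F -> ccf (fun x => (F x)^-1).
Proof.
move=> Fn0 [F1 F2].
pose d x := complex.Re (F x) ^+ 2 + complex.Im (F x) ^+ 2.
have dn0 x : d x != 0.
  rewrite /d; have := Fn0 x; case: (F x) => a b /=.
  apply: contra; rewrite paddr_eq0 ?sqr_ge0 // !sqrf_eq0 => /andP[/eqP -> /eqP ->].
  by [].
have dc : continuous d.
  move=> x; rewrite /d.
  have := continuousD (continuousM (F1 x) (F1 x)) (continuousM (F2 x) (F2 x)).
  by [].
have E1 : (fun x => complex.Re ((F x)^-1)) = (fun x => complex.Re (F x) * (d x)^-1).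
  by apply: funext => x; rewrite /d; case: (F x) => a b.
have E2 : (fun x => complex.Im ((F x)^-1)) = (fun x => - complex.Im (F x) * (d x)^-1).
  apply: funext => x; rewrite /d; case: (F x) => a b /=; by rewrite mulNr.
split; [rewrite E1|rewrite E2] => x.
  have := continuousM (F1 x) (continuousV (dn0 x) (dc x)).
  by [].
have := continuousM (continuousN (F2 x)) (continuousV (dn0 x) (dc x)).
by [].
Qed.

Lemma ccf_sum (I : Type) (r : seq I) (P : pred I) (F : I -> T -> C) :
  (forall i, ccf (F i)) -> ccf (fun x => \sum_(i <- r | P i) F i x).
Proof.
move=> H; elim: r => [|a r IH].
  by under eq_fun do rewrite big_nil; apply: ccf_cst.
under eq_fun do rewrite big_cons.
case: (P a) => //; exact: ccf_add.
Qed.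

Lemma ccf_prod (I : Type) (r : seq I) (P : pred I) (F : I -> T -> C) :
  (forall i, ccf (F i)) -> ccf (fun x => \prod_(i <- r | P i) F i x).
Proof.
move=> H; elim: r => [|a r IH].
  by under eq_fun do rewrite big_nil; apply: ccf_cst.
under eq_fun do rewrite big_cons.
case: (P a) => //; exact: ccf_mul.
Qed.

End Cont.


Section ContMx.
Variable R : realType.
Local Notation C := R[i].
Variable T : topologicalType.

Definition ccm m n (F : T -> 'M[C]_(m,n)) := forall i j, ccf (fun x => F x i j).

Lemma ccm_cst m n (A : 'M[C]_(m,n)) : ccm (fun=> A).
Proof. by move=> i j; apply: ccf_cst. Qed.

Lemma ccm_add m n (F G : T -> 'M[C]_(m,n)) : ccm F -> ccm G -> ccm (fun x => F x + G x).
Proof. move=> HF HG i j; under eq_fun do rewrite mxE; exact: ccf_add. Qed.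

Lemma ccm_opp m n (F : T -> 'M[C]_(m,n)) : ccm F -> ccm (fun x => - F x).
Proof. move=> HF i j; under eq_fun do rewrite mxE; exact: ccf_opp. Qed.

Lemma ccm_mul m n p (F : T -> 'M[C]_(m,n)) (G : T -> 'M[C]_(n,p)) :
  ccm F -> ccm G -> ccm (fun x => F x *m G x).
Proof.
move=> HF HG i j; under eq_fun do rewrite mxE.
by apply: ccf_sum => k; apply: ccf_mul.
Qed.

Lemma ccm_scale m n (c : C) (F : T -> 'M[C]_(m,n)) : ccm F -> ccm (fun x => c *: F x).
Proof. move=> HF i j; under eq_fun do rewrite mxE; apply: ccf_mul => //; exact: ccf_cst. Qed.

Lemma ccm_adj m n (F : T -> 'M[C]_(m,n)) : ccm F -> ccm (fun x => adjmx (F x)).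
Proof. move=> HF i j; under eq_fun do rewrite !mxE; exact: ccf_conj. Qed.

Lemma ccf_det n (F : T -> 'M[C]_n) : ccm F -> ccf (fun x => \det (F x)).
Proof.
move=> HF; rewrite /determinant; apply: ccf_sum => s.
apply: ccf_mul; first exact: ccf_cst.
by apply: ccf_prod => i.
Qed.

Lemma ccm_adjugate n (F : T -> 'M[C]_n) : ccm F -> ccm (fun x => \adj (F x)).
Proof.
move=> HF i j; under eq_fun do rewrite mxE /cofactor.
apply: ccf_mul; first exact: ccf_cst.
apply: ccf_det => a b; under eq_fun do rewrite !mxE; exact: HF.
Qed.

Lemma ccm_inv n (F : T -> 'M[C]_n) : (forall x, F x \in unitmx) -> ccm F ->
  ccm (fun x => invmx (F x)).
Proof.
move=> Fu HF.
have -> : (fun x => invmx (F x)) = (fun x => (\det (F x))^-1 *: \adj (F x)).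
  by apply: funext => x; rewrite /invmx Fu.
move=> i j; under eq_fun do rewrite mxE.
apply: ccf_mul; last exact: ccm_adjugate.
apply: ccf_inv; last exact: ccf_det.
by move=> x; have := Fu x; rewrite unitmxE unitfE.
Qed.

End ContMx.

Section Borel.
Local Open Scope classical_set_scope.
Variable R : realType.
Local Notation C := R[i].
Variables l n : nat.

Definition unrealify (M : 'M[R]_(l, n * (n + n))) : mxtuple R l n :=
  fun k => \matrix_(i, j) ((vec_mx (row k M)) i (lshift n j) +i*
                           (vec_mx (row k M)) i (rshift n j))%C.

Lemma unrealifyK (X : mxtuple R l n) : unrealify (realify X) = X.
Proof.
apply: funext => k; apply/matrixP => i j; rewrite /unrealify.
have -> : row k (realify X) = mxvec (reim (X k)).
  by apply/rowP => a; rewrite !mxE.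
rewrite mxE mxvecK /reim row_mxEl row_mxEr !mxE.
by case: (X k i j).
Qed.

Lemma ccm_unrealify k : ccm (fun M : 'M[R]_(l, n * (n + n)) => unrealify M k).
Proof.
move=> i j; split.
  under eq_fun do rewrite !mxE /=.
  move=> x; exact: coord_continuous.
under eq_fun do rewrite !mxE /=.
move=> x; exact: coord_continuous.
Qed.

Lemma borel_of_ccm (g : mxtuple R l n -> 'M[C]_n) :
  ccm (fun M : 'M[R]_(l, n * (n + n)) => g (unrealify M)) -> borel_fun g.
Proof.
move=> Hg V oV.
pose h := fun M : 'M[R]_(l, n * (n + n)) => reim (g (unrealify M)).
exists (h @^-1` V); split.
  apply: sub_gen_smallest; apply: (continuousP _).1 => //.
  apply: mx_cont => i j; rewrite /h /reim.
  rewrite -[j]splitK; case: (fintype.split j) => j' /=.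
    under eq_fun do rewrite row_mxEl mxE; exact: (Hg i j').1.
  under eq_fun do rewrite row_mxEr mxE; exact: (Hg i j').2.
by apply: funext => X; rewrite /h /= unrealifyK.
Qed.

End Borel.

Section Mxdiag.
Variable (R : comPzRingType) (p : nat) (p_ : 'I_p -> nat).

Lemma mul_mxdiag (D E : forall i, 'M[R]_(p_ i)) :
  mxdiag D *m mxdiag E = mxdiag (fun i => D i *m E i).
Proof.
rewrite {2}/mxdiag mul_mxdiag_mxblock /mxdiag; apply: eq_mxblock => i j.
case: eqP => [e|_]; last by rewrite mulmx0.
by subst j; rewrite !conform_mx_id.
Qed.

Lemma map_mxdiag (f : R -> R) (D : forall i, 'M[R]_(p_ i)) : f 0 = 0 ->
  map_mx f (mxdiag D) = mxdiag (fun i => map_mx f (D i)).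
Proof.
move=> f0.
have -> : map_mx f (mxdiag D) = mxblock (fun i j =>
   map_mx f (if i == j then conform_mx 0 (D i) else (0 : 'M[R]_(p_ i, p_ j)))).
  by apply/matrixP => a b; rewrite !mxE.
rewrite /mxdiag; apply: eq_mxblock => i j.
case: eqP => [e|_]; last by apply/matrixP => a b; rewrite !mxE f0.
by subst j; rewrite !conform_mx_id.
Qed.

End Mxdiag.

Section Adj.
Variable R : realType.
Local Notation C := R[i].

Lemma adjmxK m n (A : 'M[C]_(m,n)) : adjmx (adjmx A) = A.
Proof. by apply/matrixP => i j; rewrite !mxE conjCK. Qed.

Lemma adjmxD m n (A B : 'M[C]_(m,n)) : adjmx (A + B) = adjmx A + adjmx B.
Proof. by apply/matrixP => i j; rewrite !mxE rmorphD. Qed.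

Lemma adjmxN m n (A : 'M[C]_(m,n)) : adjmx (- A) = - adjmx A.
Proof. by apply/matrixP => i j; rewrite !mxE rmorphN. Qed.

Lemma adjmxB m n (A B : 'M[C]_(m,n)) : adjmx (A - B) = adjmx A - adjmx B.
Proof. by rewrite adjmxD adjmxN. Qed.

Lemma adjmxZ m n c (A : 'M[C]_(m,n)) : adjmx (c *: A) = Num.conj c *: adjmx A.
Proof. by apply/matrixP => i j; rewrite !mxE rmorphM. Qed.

Lemma adjmxM m n p (A : 'M[C]_(m,n)) (B : 'M[C]_(n,p)) :
  adjmx (A *m B) = adjmx B *m adjmx A.
Proof.
apply/matrixP => i j; rewrite !mxE rmorph_sum; apply: eq_bigr => k _.
by rewrite !mxE rmorphM mulrC.
Qed.

Lemma adjmx_scalar n c : adjmx (c%:M : 'M[C]_n) = (Num.conj c)%:M.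
Proof. by apply/matrixP => i j; rewrite !mxE rmorphMn eq_sym. Qed.

Lemma adjmx1 n : adjmx (1%:M : 'M[C]_n) = 1%:M.
Proof. by rewrite adjmx_scalar rmorph1. Qed.

Lemma adjmx_mxdiag s (p : 'I_s -> nat) (D : forall i, 'M[C]_(p i)) :
  adjmx (mxdiag D) = mxdiag (fun i => adjmx (D i)).
Proof. by rewrite /adjmx map_mxdiag ?rmorph0 // tr_mxdiag. Qed.

Lemma inv_uniq n (P Q : 'M[C]_n) : P *m Q = 1%:M -> invmx P = Q.
Proof.
move=> h; have [Pu _] := mulmx1_unit h.
by rewrite -[invmx P]mulmx1 -h mulmxA mulVmx // mul1mx.
Qed.

Lemma unitary_inv n (U : 'M[C]_n) : unitarymx U -> invmx U = adjmx U.
Proof. by move=> [_ h]; apply: inv_uniq. Qed.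

Lemma unitary_unit n (U : 'M[C]_n) : unitarymx U -> U \in unitmx.
Proof. by move=> [_ h]; have [] := mulmx1_unit h. Qed.

Definition herm (b : bool) n (Z : 'M[C]_n) :=
  if b then Z + adjmx Z else 'i *: (Z - adjmx Z).

Lemma herm_adj b n (Z : 'M[C]_n) : adjmx (herm b Z) = herm b Z.
Proof.
case: b; rewrite /herm.
  by rewrite adjmxD adjmxK addrC.
rewrite adjmxZ adjmxB adjmxK conjCi scaleNr -scalerN opprB.
done.
Qed.

Definition nrm2 n (v : 'cV[C]_n) := (adjmx v *m v) 0 0.

Lemma nrm2E n (v : 'cV[C]_n) : nrm2 v = \sum_i `|v i 0| ^+ 2.
Proof.
rewrite /nrm2 mxE; apply: eq_bigr => i _.
by rewrite !mxE normCK mulrC.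
Qed.

Lemma nrm2_ge0 n (v : 'cV[C]_n) : 0 <= nrm2 v.
Proof. by rewrite nrm2E sumr_ge0 // => i _; rewrite exprn_ge0. Qed.

Lemma nrm2_eq0 n (v : 'cV[C]_n) : nrm2 v = 0 -> v = 0.
Proof.
rewrite nrm2E => /eqP; rewrite psumr_eq0 => [/allP h|i _]; last by rewrite exprn_ge0.
apply/matrixP => i j; rewrite ord1 mxE.
have := h i (mem_index_enum _); rewrite /= sqrf_eq0 normr_eq0.
by move/eqP.
Qed.

Lemma herm_sq n (G : 'M[C]_n) : adjmx G = G ->
  adjmx (G + 'i%:M) *m (G + 'i%:M) = G *m G + 1%:M.
Proof.
move=> hG; rewrite adjmxD hG adjmx_scalar conjCi.
rewrite mulmxDl !mulmxDr mul_mx_scalar !mul_scalar_mx scale_scalar_mx.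
rewrite mulNr -expr2 sqrCi opprK scaleNr.
by rewrite addrA addrK.
Qed.

Lemma herm_ineq n (G : 'M[C]_n) (w : 'cV[C]_n) : adjmx G = G ->
  nrm2 w <= nrm2 ((G + 'i%:M) *m w).
Proof.
move=> hG; rewrite /nrm2 adjmxM mulmxA -[adjmx w *m _ *m _]mulmxA herm_sq //.
have -> : adjmx w *m (G *m G + 1%:M) *m w = adjmx (G *m w) *m (G *m w) + adjmx w *m w.
  rewrite mulmxDr mulmxDl mulmx1 adjmxM hG !mulmxA //.
rewrite [X in _ <= X]mxE lerDr.
exact: (nrm2_ge0 (G *m w)).
Qed.

Lemma herm_unit n (G : 'M[C]_n) : adjmx G = G -> (G + 'i%:M) \in unitmx.
Proof.
move=> hG; apply: contraT => nu.
have : ~~ row_free (G + 'i%:M)^T by rewrite row_free_unit unitmx_tr.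
rewrite -kermx_eq0 => /rowV0Pn [x /sub_kermxP hx xn0].
have hw : (G + 'i%:M) *m x^T = 0 by rewrite -[LHS]trmxK trmx_mul trmxK hx trmx0.
have := herm_ineq x^T hG; rewrite hw.
have -> : nrm2 (0 : 'cV[C]_n) = 0 by rewrite /nrm2 mulmx0 mxE.
move=> h; have /nrm2_eq0 : nrm2 x^T = 0 by apply/eqP; rewrite eq_le h nrm2_ge0.
move/(congr1 trmx); rewrite trmxK trmx0 => x0.
by rewrite x0 eqxx in xn0.
Qed.

Definition resolv n (G : 'M[C]_n) := invmx (G + 'i%:M).

Lemma resolv_bound n (G : 'M[C]_n) : adjmx G = G -> opnorm_le (resolv G) 1.
Proof.
move=> hG; split => // v.
rewrite expr1n mul1r -!nrm2E.
have hu := herm_unit hG.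
have := herm_ineq (resolv G *m v) hG.
by rewrite mulmxA mulmxV // mul1mx.
Qed.


Lemma mxdiag_scale s (p : 'I_s -> nat) (c : C) (D : forall i, 'M[C]_(p i)) :
  c *: mxdiag D = mxdiag (fun i => c *: D i).
Proof.
rewrite -mul_scalar_mx -(mxdiagZ (p_ := p)) mul_mxdiag.
by apply: eq_mxdiag => i; rewrite mul_scalar_mx.
Qed.

Lemma adj_conj n (U Z : 'M[C]_n) : adjmx (U *m Z *m adjmx U) = U *m adjmx Z *m adjmx U.
Proof. by rewrite !adjmxM adjmxK mulmxA. Qed.

Lemma herm_conj b n (U Z : 'M[C]_n) : unitarymx U ->
  herm b (U *m Z *m invmx U) = U *m herm b Z *m invmx U.
Proof.
move=> hU; rewrite unitary_inv // /herm adj_conj; case: b.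
  by rewrite mulmxDr mulmxDl.
by rewrite -scalemxAr -scalemxAl mulmxBr mulmxBl.
Qed.

Lemma herm_diag b s (p : 'I_s -> nat) (D : forall i, 'M[C]_(p i)) :
  herm b (mxdiag D) = mxdiag (fun i => herm b (D i)).
Proof.
rewrite /herm adjmx_mxdiag; case: b; first by rewrite mxdiagD.
by rewrite -mxdiagB mxdiag_scale.
Qed.

Lemma resolv_conj n (U H : 'M[C]_n) : unitarymx U -> adjmx H = H ->
  resolv (U *m H *m invmx U) = U *m resolv H *m invmx U.
Proof.
move=> hU hH; rewrite /resolv; apply: inv_uniq.
have Uu := unitary_unit hU; have Pu := herm_unit hH.
have -> : U *m H *m invmx U + 'i%:M = U *m (H + 'i%:M) *m invmx U.
  by rewrite [in RHS]mulmxDr [in RHS]mulmxDl mul_mx_scalar -scalemxAl mulmxV // scalemx1.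
rewrite !mulmxA -[U *m _ *m _ *m U]mulmxA mulVmx // mulmx1.
by rewrite -[U *m _ *m _]mulmxA mulmxV // mulmx1 mulmxV.
Qed.

Lemma resolv_diag s (p : 'I_s -> nat) (D : forall i, 'M[C]_(p i)) :
  (forall i, adjmx (D i) = D i) ->
  resolv (mxdiag D) = mxdiag (fun i => resolv (D i)).
Proof.
move=> hD; rewrite /resolv; apply: inv_uniq.
rewrite -(mxdiagZ (p_ := p) 'i) -mxdiagD mul_mxdiag -(mxdiagZ (p_ := p) 1).
by apply: eq_mxdiag => i; rewrite mulmxV // herm_unit.
Qed.

Variable l : nat.

Definition vfun (k : 'I_l) (b : bool) : ncfun R l :=
  fun n X => resolv (herm b (X k)).
Arguments vfun : clear implicits.

Lemma vfun_compatible k b : compatible (vfun k b).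
Proof.
move=> s p X U hU; rewrite /vfun /mxact /mxtuple_dsum.
rewrite herm_conj // resolv_conj ?herm_adj // herm_diag resolv_diag //.
by move=> i; rewrite herm_adj.
Qed.

Lemma vfun_borel k b n : borel_fun (vfun k b n).
Proof.
apply: borel_of_ccm; rewrite /vfun.
apply: ccm_inv; first by move=> x; rewrite herm_unit // herm_adj.
apply: ccm_add; last exact: ccm_cst.
have hk := @ccm_unrealify R l n k.
rewrite /herm; case: b.
  by apply: ccm_add => //; apply: ccm_adj.
by apply: ccm_scale; apply: ccm_add => //; apply: ccm_opp; apply: ccm_adj.
Qed.

Lemma vfun_inF K k b : in_F K (vfun k b).
Proof.
split; first exact: vfun_compatible.
split; first by move=> n; apply: vfun_borel.
have hb n X : opnorm_le (vfun k b n X) 1 by apply: resolv_bound; rewrite herm_adj.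
by case: K => //; [move=> r _|]; exists 1.
Qed.

End Adj.

Section Schur.
Variable R : realType.
Local Notation C := R[i].
Variable l : nat.

Lemma adjmx_col m1 m2 n (A : 'M[C]_(m1, n)) (B : 'M[C]_(m2, n)) :
  adjmx (col_mx A B) = row_mx (adjmx A) (adjmx B).
Proof. by rewrite /adjmx map_col_mx tr_col_mx. Qed.

Lemma not_irr_of n a b (H : (a + b = n)%N) (X : mxtuple R l n) (W : 'M[C]_(a + b, n)) :
  W *m adjmx W = 1%:M -> (0 < a)%N -> (0 < b)%N ->
  (forall k, usubmx W *m X k *m adjmx (dsubmx W) = 0) ->
  (forall k, dsubmx W *m X k *m adjmx (usubmx W) = 0) -> ~ irreducible X.
Proof.
case: n / H in X W *; move=> hW ha hb h1 h2; apply.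
have hW' : adjmx W *m W = 1%:M := mulmx1C hW.
have hU : unitarymx (adjmx W) by split; rewrite adjmxK.
exists a, b, (fun k => usubmx W *m X k *m adjmx (usubmx W)),
  (fun k => dsubmx W *m X k *m adjmx (dsubmx W)), (adjmx W), erefl.
split => //; apply: funext => k; rewrite castmx_id unitary_inv // adjmxK.
have -> : block_mx (usubmx W *m X k *m adjmx (usubmx W)) 0 0
                   (dsubmx W *m X k *m adjmx (dsubmx W)) = W *m X k *m adjmx W.
  have eW : W = col_mx (usubmx W) (dsubmx W) by rewrite vsubmxK.
  by rewrite [in RHS]eW adjmx_col mul_col_mx mul_col_row h1 h2.
by rewrite !mulmxA hW' mul1mx -mulmxA hW' mulmx1.
Qed.


Lemma adjmx_tstar m n (A : 'M[C]_(m, n)) : adjmx A = map_mx Num.conj (A^T).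
Proof. by apply/matrixP => i j; rewrite !mxE. Qed.

Lemma adj_sandwich m n p (P : 'M[C]_(m, n)) (Y : 'M[C]_n) (Q : 'M[C]_(p, n)) :
  Q *m Y *m adjmx P = adjmx (P *m adjmx Y *m adjmx Q).
Proof. by rewrite !adjmxM !adjmxK mulmxA. Qed.

Lemma adjmx0 m n : adjmx (0 : 'M[C]_(m, n)) = 0.
Proof. by apply/matrixP => i j; rewrite !mxE rmorph0. Qed.

Lemma stab_eig n (M : 'M[C]_n) c (Y : 'M[C]_n) : M *m Y = Y *m M ->
  (eigenspace M c *m Y <= eigenspace M c)%MS.
Proof.
move=> hY; apply/sub_kermxP.
rewrite -mulmxA mulmxBr -hY scalar_mxC -mulmxBl.
by rewrite mulmxA mulmx_ker mul0mx.
Qed.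

Lemma sc_unitary n m (E : 'M[C]_(m, n)) :
  spectral.schmidt_complete E *m adjmx (spectral.schmidt_complete E) = 1%:M.
Proof.
by rewrite adjmx_tstar; apply/spectral.unitarymxP; exact: spectral.schmidt_complete_unitarymx.
Qed.

Lemma sc_orth n m (E : 'M[C]_(m, n)) (Y : 'M[C]_n) : (E *m Y <= E)%MS ->
  usubmx (spectral.schmidt_complete E) *m Y *m
    adjmx (dsubmx (spectral.schmidt_complete E)) = 0.
Proof.
move=> hY; rewrite /spectral.schmidt_complete col_mxKu col_mxKd adjmx_tstar.
apply/spectral.orthomx1P.
rewrite (eqmxMr Y (spectral.eqmx_schmidt_free (row_base_free E))).
rewrite (eqmxMr Y (eq_row_base E)).
apply: submx_trans hY _.
rewrite sesquilinear.orthomx_sym.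
by rewrite (spectral.eqmx_schmidt_free (row_base_free _)) eq_row_base.
Qed.

Lemma schur n (X : mxtuple R l n) (M : 'M[C]_n) : irreducible X ->
  (forall k, M *m X k = X k *m M) ->
  (forall k, M *m adjmx (X k) = adjmx (X k) *m M) -> exists c, M = c%:M.
Proof.
case: n X M => [|n] X M hirr h1 h2.
  by exists 0; apply/matrixP => [[]].
have [c hc] := spectral.eigenvalue_closed M (ltn0Sn n).
have [full|nfull] := boolP (row_full (eigenspace M c)).
  exists c; have : (1%:M <= eigenspace M c)%MS by rewrite submx_full.
  by move/sub_kermxP; rewrite mul1mx => /eqP; rewrite subr_eq0 => /eqP.
exfalso.
have hE : eigenspace M c != 0 by [].
move: (eigenspace M c) hE nfull (stab_eig c (M:=M)) => E hE nfull stab.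
apply: (not_irr_of (spectral.add_rank_ortho E) (sc_unitary E)).
- by rewrite lt0n mxrank_eq0.
- rewrite spectral.rank_ortho subn_gt0 ltn_neqAle rank_leq_col andbT.
  by move: nfull; rewrite /row_full.
- by move=> k; apply: sc_orth; apply: stab; apply: h1.
move=> k; rewrite adj_sandwich sc_orth ?adjmx0 //.
  by apply: stab; apply: h2.
exact: hirr.
Qed.
End Schur.

Section Comm.
Variable R : realType.
Local Notation C := R[i].

Lemma comm_resolv n (M G : 'M[C]_n) : adjmx G = G ->
  M *m resolv G = resolv G *m M -> M *m G = G *m M.
Proof.
move=> hG hM; have Pu := herm_unit hG.
have QP : resolv G *m (G + 'i%:M) = 1%:M by rewrite mulVmx.
have PQ : (G + 'i%:M) *m resolv G = 1%:M by rewrite mulmxV.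
have hP : (G + 'i%:M) *m M = M *m (G + 'i%:M).
  by rewrite -[_ *m M]mulmx1 -QP !mulmxA -(mulmxA _ M) hM mulmxA PQ mul1mx.
move: hP; rewrite mulmxDr mulmxDl scalar_mxC => /addIr.
done.
Qed.

Lemma comm_X n (M Z : 'M[C]_n) :
  (forall b, M *m herm b Z = herm b Z *m M) ->
  M *m Z = Z *m M /\ M *m adjmx Z = adjmx Z *m M.
Proof.
move=> h.
have hc A B : M *m A = A *m M -> M *m B = B *m M -> forall c d,
   M *m (c *: A + d *: B) = (c *: A + d *: B) *m M.
  by move=> hA hB c d; rewrite mulmxDr mulmxDl -!scalemxAr -!scalemxAl hA hB.
have h2 : (2 : C) != 0 by rewrite pnatr_eq0.
have eZ : Z = 2^-1 *: herm true Z + (- 'i / 2) *: herm false Z.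
  have e1 : - 'i / 2 * 'i = 2^-1 :> C.
    by rewrite mulrAC mulNr -expr2 sqrCi opprK mul1r.
  rewrite /herm scalerA e1 -scalerDr addrACA subrr addr0.
  by rewrite scalerDr -scalerDl -[2^-1]mul1r -splitr scale1r.
have eZ' : adjmx Z = 2^-1 *: herm true Z + ('i / 2) *: herm false Z.
  have e2 : 'i / 2 * 'i = - 2^-1 :> C.
    by rewrite mulrAC -expr2 sqrCi mulN1r.
  rewrite /herm scalerA e2 scaleNr -scalerBr opprB [_ - Z]addrC addrACA subrr add0r.
  by rewrite scalerDr -scalerDl -[2^-1]mul1r -splitr scale1r.
by split; [rewrite eZ | rewrite eZ']; apply: hc; apply: h.
Qed.
End Comm.

Section Casts.
Variable R : realType.
Local Notation C := R[i].

Lemma castmx_irr m n m' n' (e1 e1' : m = m') (e2 e2' : n = n') (A : 'M[C]_(m,n)) :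
  castmx (e1, e2) A = castmx (e1', e2') A.
Proof. by rewrite (eq_irrelevance e1 e1') (eq_irrelevance e2 e2'). Qed.

Lemma castmx_mulmx n n' (e : n = n') (A B : 'M[C]_n) :
  castmx (e, e) (A *m B) = castmx (e, e) A *m castmx (e, e) B.
Proof. by case: n' / e; rewrite !castmx_id. Qed.

Lemma castmx_inv n n' (e : n = n') (A : 'M[C]_n) :
  castmx (e, e) (invmx A) = invmx (castmx (e, e) A).
Proof. by case: n' / e; rewrite !castmx_id. Qed.

Lemma castmx_unitary n n' (e : n = n') (U : 'M[C]_n) :
  unitarymx U -> unitarymx (castmx (e, e) U).
Proof. by case: n' / e; rewrite !castmx_id. Qed.

Lemma f_cast l (f : ncfun R l) m m' (e : m = m') (Y : mxtuple R l m) :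
  f m' (fun k => castmx (e, e) (Y k)) = castmx (e, e) (f m Y).
Proof.
by case: m' / e.
Qed.

Lemma block_cast_r a b b' (e2 : b = b') (e : (a + b = a + b')%N)
  (A : 'M[C]_a) (B : 'M[C]_b) :
  castmx (e, e) (block_mx A 0 0 B) = block_mx A 0 0 (castmx (e2, e2) B).
Proof.
by case: b' / e2 in e *; rewrite (eq_irrelevance e (erefl _)) !castmx_id.
Qed.

Lemma block_empty b k (Bm : 'M[C]_b) (Z : 'M[C]_k) (e0 : k = 0%N) s
  (e : (b + k = s)%N) (e2 : b = s) :
  castmx (e, e) (block_mx Bm 0 0 Z) = castmx (e2, e2) Bm.
Proof.
case: s / e2 in e *; subst k; rewrite castmx_id.
apply/matrixP => i j; rewrite castmxE.
have -> : cast_ord (esym e) i = lshift 0 i by apply: val_inj.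
have -> : cast_ord (esym e) j = lshift 0 j by apply: val_inj.
by rewrite block_mxEul.
Qed.

Definition pp (a b : nat) : 'I_2 -> nat := fun j => if j == ord0 then a else b.

Definition sel a b (Am : 'M[C]_a) (Bm : 'M[C]_b) : forall j : 'I_2, 'M[C]_(pp a b j) :=
  fun j => if j == ord0 as c return 'M[C]_(if c then a else b) then Am else Bm.

Lemma pp_sum a b : (a + b = \sum_(j < 2) pp a b j)%N.
Proof. by rewrite !big_ord_recl big_ord0 addn0. Qed.

Lemma D2 a b (Am : 'M[C]_a) (Bm : 'M[C]_b) (e : (a + b = \sum_(j < 2) pp a b j)%N) :
  castmx (e, e) (block_mx Am 0 0 Bm) = mxdiag (sel Am Bm).
Proof.
rewrite mxdiag_recl mxdiag_recl.
have e0 : (\sum_(i < 0) pp a b (lift ord0 (lift ord0 i)) = 0)%N by rewrite big_ord0.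
have e2 : b = (\sum_(i < 1) pp a b (lift ord0 i))%N by rewrite big_ord_recl big_ord0 addn0.
rewrite (block_empty _ _ e0 _ e2).
have e' : (a + b = a + \sum_(i < 1) pp a b (lift ord0 i))%N by rewrite -e2.
rewrite -(block_cast_r e2 e') castmx_comp.
exact: castmx_irr.
Qed.

End Casts.

Section Main.
Variable R : realType.
Local Notation C := R[i].
Variable l : nat.

Lemma L1 (f : ncfun R l) (hf : compatible f) n a b (A : mxtuple R l a)
  (B : mxtuple R l b) (U : 'M[C]_(a + b)) (H : (a + b = n)%N) : unitarymx U ->
  f n (fun k => castmx (H, H) (U *m block_mx (A k) 0 0 (B k) *m invmx U)) =
  castmx (H, H) (U *m block_mx (f a A) 0 0 (f b B) *m invmx U).
Proof.
move=> hU; pose e := pp_sum a b.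
pose Xd : forall j : 'I_2, mxtuple R l (pp a b j) := fun j =>
  if j == ord0 as c return mxtuple R l (if c then a else b) then A else B.
have hU' := castmx_unitary e hU.
have := hf 2%N (pp a b) Xd _ hU'.
have E1 : mxact (castmx (e, e) U) (mxtuple_dsum Xd) =
    fun k => castmx (e, e) (U *m block_mx (A k) 0 0 (B k) *m invmx U).
  apply: funext => k; rewrite /mxact /mxtuple_dsum !castmx_mulmx castmx_inv.
  congr (_ *m _ *m _); rewrite D2; apply: eq_mxdiag => j.
  by rewrite /sel /Xd /pp; case: (j == ord0).
have E2 : mxdiag (fun j => f (pp a b j) (Xd j)) =
    castmx (e, e) (block_mx (f a A) 0 0 (f b B)).
  by rewrite D2; apply: eq_mxdiag => j; rewrite /sel /Xd /pp; case: (j == ord0).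
rewrite E1 E2 -castmx_inv -!castmx_mulmx => h.
pose e' := etrans (esym e) H.
have -> : (fun k => castmx (H, H) (U *m block_mx (A k) 0 0 (B k) *m invmx U)) =
   fun k => castmx (e', e') (castmx (e, e) (U *m block_mx (A k) 0 0 (B k) *m invmx U)).
  by apply: funext => k; rewrite castmx_comp; apply: castmx_irr.
rewrite (f_cast f e' (fun k => castmx (e, e) (U *m block_mx (A k) 0 0 (B k) *m invmx U))).
by rewrite h castmx_comp; apply: castmx_irr.
Qed.


Lemma conj_mul n (U P Q : 'M[C]_n) : U \in unitmx ->
  U *m P *m invmx U *m (U *m Q *m invmx U) = U *m (P *m Q) *m invmx U.
Proof.
move=> hU; rewrite !mulmxA; congr (_ *m _).
by rewrite -[U *m P *m invmx U *m U]mulmxA mulVmx // mulmx1.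
Qed.

Lemma revdir (u v : ncfun R l) (hu : compatible u) (hv : compatible v)
  (hs : forall n (X : mxtuple R l n), irreducible X -> exists c : C, u n X = c%:M) :
  forall n (X : mxtuple R l n), u n X *m v n X = v n X *m u n X.
Proof.
move=> n; elim/ltn_ind: n => n IH X.
case: (pselect (irreducible X)) => hirr.
  by have [c ->] := hs n X hirr; rewrite scalar_mxC.
move/contrapT: hirr => [a [b [A [B [U [H [ha hb hU eX]]]]]]].
rewrite eX (L1 hu) // (L1 hv) // -!castmx_mulmx; congr castmx.
have Uu := unitary_unit hU.
rewrite !conj_mul //; congr (_ *m _ *m _).
rewrite !mulmx_block !mulmx0 !mul0mx !addr0 !add0r.
have ha' : (a < n)%N by rewrite -H -{1}[a]addn0 ltn_add2l.
have hb' : (b < n)%N by rewrite -H -{1}[b]add0n ltn_add2r.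
by rewrite (IH a ha' A) (IH b hb' B).
Qed.

End Main.

Theorem corollary2p6 (R : realType) (l : nat) (K : Fkind) (u : ncfun R l) :
  in_center K u <->
  (in_F K u /\
   forall (n : nat) (X : mxtuple R l n), irreducible X ->
     exists c : R[i], u n X = c%:M).
Proof.
split.
- move=> [huF hc]; split => // n X hirr.
  have hb : forall k b, u n X *m herm b (X k) = herm b (X k) *m u n X.
    move=> k b; apply: comm_resolv; first exact: herm_adj.
    by have := hc _ (@vfun_inF R l K k b) n X.
  apply: (schur hirr) => k; [exact: (comm_X (hb k)).1 | exact: (comm_X (hb k)).2].
- move=> [huF hs]; split => // v hv n X.
  by apply: revdir => //; [exact: huF.1 | exact: hv.1].
Qed.
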